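(* Let $N\ge 1$ patches, indexed $I=1,\dots,N$, be equispaced with macroscale spacing $H>0$ on an $L$-periodic domain, $L=NH$. Each patch carries $n\ge1$ interior lattice points with microscale spacing $d>0$, so the patch width is $h=nd=rH$ with $0<r\le 1$, and the left-next-to-edge point of patch $I$ is at $x^I_1=x^1_1+(I-1)H$. The interior values $u^I_i(t)\in\mathbb{R}$, $i=1,\dots,n$, evolve by $$d^2\partial_t u^I_i=\kappa^I_{i+\frac12}(u^I_{i+1}-u^I_i)+\kappa^I_{i-\frac12}(u^I_{i-1}-u^I_i),\qquad i=1,\dots,n,$$ with real diffusivities $\kappa^I_{i\pm1/2}$ satisfying $\kappa^I_{1/2}=\kappa^J_{n+1/2}$ for all patches $I,J$. The edge values are defined by spectral interpolation $$u^I_{n+1}=\sum_{J=1}^N \mathcal I^{IJ}_{n1}u^J_1,\quad \mathcal I^{IJ}_{n1}=\frac1N\sum_{k\in\mathcal K}e^{\mathrm{i}kH(I-J+r)},\qquad u^I_{0}=\sum_{J=1}^N \mathcal I^{IJ}_{1n}u^J_n,\quad \mathcal I^{IJ}_{1n}=\frac1N\sum_{k\in\mathcal K}e^{\mathrm{i}kH(I-J-r)},$$ where $\mathcal K$ is a fixed finite set of integer multiples of $2\pi/L$ that is symmetric ($k\in\mathcal K\Rightarrow -k\in\mathcal K$). Then all $\mathcal I^{IJ}_{n1},\mathcal I^{IJ}_{1n}$ are real, $\mathcal I^{IJ}_{1n}=\mathcal I^{JI}_{n1}$ for all $I,J$, and the resulting linear system $\partial_t\mathbf u=\mathcal L\mathbf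 u$ for $\mathbf u=(u^1_1,\dots,u^1_n,\dots,u^N_1,\dots,u^N_n)\in\mathbb R^{nN}$ has a real symmetric (hence self-adjoint) matrix $\mathcal L$.
   Context: This is the ''self-adjoint patch scheme'' for 1D heterogeneous lattice diffusion: each patch's edge values $u^I_0$ and $u^I_{n+1}$ are not dynamic variables but are set by interpolating from the next-to-edge values of (possibly all) patches, with the left edge interpolated from the right-next-to-edge values $u^J_n$ and the right edge from the left-next-to-edge values $u^J_1$. Here $\mathrm i=\sqrt{-1}$. A real square matrix is self-adjoint (for the standard inner product) iff it is symmetric. *)

(* Defs.v *)
From HB Require Import structures.
From mathcomp Require Import all_boot all_order all_algebra.
From mathcomp Require Import complex.
From mathcomp Require Import reals trigo.
Set Implicit Arguments. Unset Strict Implicit. Unset Printing Implicit Defensive.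
Import Order.TTheory GRing.Theory Num.Theory.
Local Open Scope ring_scope.
Local Open Scope complex_scope.

Definition expi (R : realType) (theta : R) : R[i] := cos theta +i* sin theta.

(* Patches are indexed 0..N-1 (paper: 1..N); only differences I-J matter. *)
Definition interp_n1 (R : realType) (N : nat) (H r : R) (K : seq R) (I J : nat) : R[i] :=
  (N%:R)^-1 * \sum_(k <- K) expi (k * H * (I%:R - J%:R + r)).
Definition interp_1n (R : realType) (N : nat) (H r : R) (K : seq R) (I J : nat) : R[i] :=
  (N%:R)^-1 * \sum_(k <- K) expi (k * H * (I%:R - J%:R - r)).

(* State vector u = (u^1_1..u^1_n, ..., u^N_1..u^N_n) in R^{nN}: the entry
   u^I_i (I = 0..N-1, i = 1..n) is stored at index I*n + (i-1). *)
Definition uval (R : realType) (N n : nat) (u : 'cV[R]_(N * n)) (I i : nat) : R :=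
  if @insub _ (fun m => (m < N * n)%N) _ (I * n + i.-1)%N is Some b then u b 0 else 0.

(* Extended patch values u^I_i for i = 0..n+1 (complex, since the edge values
   are defined through complex interpolation):
   u^I_0     = sum_J I^{IJ}_{1n} u^J_n,
   u^I_{n+1} = sum_J I^{IJ}_{n1} u^J_1,
   u^I_i     = interior value for 1 <= i <= n. *)
Definition uext (R : realType) (N n : nat) (H r : R) (K : seq R)
    (u : 'cV[R]_(N * n)) (I i : nat) : R[i] :=
  if i == 0%N then \sum_(J < N) interp_1n N H r K I J * (uval u J n)%:C
  else if i == n.+1 then \sum_(J < N) interp_n1 N H r K I J * (uval u J 1)%:C
  else (uval u I i)%:C.

(* Right-hand side of the patch scheme,
   d^2 du^I_i/dt = kappa^I_{i+1/2}(u^I_{i+1}-u^I_i) + kappa^I_{i-1/2}(u^I_{i-1}-u^I_i),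
   where kap I j = kappa^I_{j+1/2} (j = 0..n). *)
Definition rhs (R : realType) (N n : nat) (d H r : R) (K : seq R)
    (kap : nat -> nat -> R) (u : 'cV[R]_(N * n)) : 'cV[R[i]]_(N * n) :=
  \col_(a < N * n)
    (let I := (a %/ n)%N in let i := (a %% n).+1 in
     ((kap I i)%:C * (uext H r K u I i.+1 - uext H r K u I i)
      + (kap I i.-1)%:C * (uext H r K u I i.-1 - uext H r K u I i))
     / ((d ^+ 2)%:C)).

(* Main.v *)
Require Import Defs.
From HB Require Import structures.
From mathcomp Require Import all_boot all_order all_algebra.
From mathcomp Require Import complex.
From mathcomp Require Import reals trigo.
From mathcomp Require Import ring lra.
Set Implicit Arguments. Unset Strict Implicit. Unset Printing Implicit Defensive.
Import Order.TTheory GRing.Theory Num.Theory.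
Local Open Scope ring_scope.
Local Open Scope complex_scope.

Section Interp.
Variable R : realType.
Variable K : seq R.
Hypothesis hKuniq : uniq K.
Hypothesis hKsym : forall k, k \in K -> - k \in K.

Lemma perm_opp : perm_eq (map (fun k => - k) K) K.
Proof.
apply: uniq_perm => //; first by rewrite map_inj_uniq //; exact: oppr_inj.
move=> x; rewrite -{1}(opprK x) (mem_map oppr_inj).
apply/idP/idP => [/hKsym|/hKsym]; by rewrite ?opprK.
Qed.

Lemma sum_opp (V : zmodType) (f : R -> V) :
  \sum_(k <- K) f (- k) = \sum_(k <- K) f k.
Proof. by rewrite -(big_map (fun k => - k) xpredT f); apply: perm_big; exact: perm_opp. Qed.

Lemma sum_expi (s : seq R) (g : R -> R) :
  \sum_(k <- s) expi (g k) = (\sum_(k <- s) cos (g k)) +i* (\sum_(k <- s) sin (g k)).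
Proof.
elim: s => [|k s IH]; first by rewrite !big_nil.
by rewrite !big_cons IH.
Qed.

Lemma sumexp (H y : R) :
  \sum_(k <- K) expi (k * H * y) = (\sum_(k <- K) cos (k * H * y))%:C.
Proof.
rewrite sum_expi; congr (_ +i* _).
set s := \sum_(k <- K) _.
have : s = - s.
  rewrite {1}/s -(sum_opp (fun k => sin (k * H * y))) /s -sumrN /=; apply: eq_bigr => k _.
  by rewrite !mulNr sinN.
move=> hs; lra.
Qed.
End Interp.

Section Main.
Variable R : realType.
Variables (N n : nat) (H r d : R) (K : seq R) (kap : nat -> nat -> R).
Hypothesis hKuniq : uniq K.
Hypothesis hKsym : forall k, k \in K -> - k \in K.
Hypothesis hn : (0 < n)%N.

Definition ee (b : 'I_(N * n)) : 'cV[R]_(N * n) := delta_mx b 0.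

Definition rn1 (I J : nat) : R :=
  (N%:R)^-1 * \sum_(k <- K) cos (k * H * (I%:R - J%:R + r)).
Definition r1n (I J : nat) : R :=
  (N%:R)^-1 * \sum_(k <- K) cos (k * H * (I%:R - J%:R - r)).

Lemma interp_n1E I J : interp_n1 N H r K I J = (rn1 I J)%:C.
Proof. by rewrite /interp_n1 sumexp // rmorphM fmorphV rmorph_nat. Qed.

Lemma interp_1nE I J : interp_1n N H r K I J = (r1n I J)%:C.
Proof. by rewrite /interp_1n sumexp // rmorphM fmorphV rmorph_nat. Qed.

Lemma r1n_sym I J : r1n I J = rn1 J I.
Proof.
rewrite /r1n /rn1; congr (_ * _).
rewrite -(sum_opp hKuniq hKsym (fun k => cos (k * H * (J%:R - I%:R + r)))).
by apply: eq_bigr => k _; congr cos; ring.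
Qed.

Lemma eq_divmod (J k b : nat) : (k < n)%N ->
  (J * n + k == b)%N = (J == b %/ n)%N && (k == b %% n)%N.
Proof.
move=> kn; apply/eqP/andP => [<-|[/eqP -> /eqP ->]]; last by rewrite -divn_eq.
by rewrite divnMDl // modnMDl divn_small // modn_small // addn0.
Qed.

Lemma uval_delta (b : 'I_(N * n)) J k : (J < N)%N -> (0 < k <= n)%N ->
  uval (ee b) J k = ((J * n + k.-1)%N == b)%:R.
Proof.
move=> hJ /andP[k0 kn].
have hlt : (J * n + k.-1 < N * n)%N.
  have h1 : (J.+1 * n <= N * n)%N by rewrite leq_mul2r hJ orbT.
  apply: leq_trans h1; rewrite mulSn addnC ltn_add2r.
  by rewrite prednK.
rewrite /uval /ee; case: insubP => [x _ hx|]; last by rewrite hlt.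
by rewrite !mxE eqxx andbT -val_eqE /= hx.
Qed.

Lemma sum_delta (c : nat -> R[i]) (b : 'I_(N * n)) k : (0 < k <= n)%N ->
  \sum_(J < N) c J * (uval (ee b) J k)%:C = c (b %/ n)%N * ((k.-1 == b %% n)%N%:R)%:C.
Proof.
move=> hk.
have hk' : (k.-1 < n)%N by case/andP: hk => k0 kn; rewrite prednK.
have hbN : (b %/ n < N)%N by rewrite ltn_divLR.
rewrite (bigD1 (Ordinal hbN)) //= big1 ?addr0.
  by rewrite uval_delta // eq_divmod // eqxx.
move=> J hJ; rewrite uval_delta // eq_divmod //.
case: eqP => [hJe|]; last by rewrite mulr0.
by move: hJ; rewrite -val_eqE /= hJe eqxx.
Qed.

Lemma modS_full a : (a.+1 %% n = if (a %% n).+1 == n then 0 else (a %% n).+1)%N.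
Proof.
rewrite {1}(divn_eq a n) -addnS modnMDl; case: eqP => h; first by rewrite h modnn.
by rewrite modn_small // ltn_neqAle ltn_pmod // andbT; apply/eqP.
Qed.

Lemma divS_ne a : (a %% n).+1 != n -> (a.+1 %/ n = a %/ n)%N.
Proof.
move=> h; have h' : ((a %% n).+1 < n)%N by rewrite ltn_neqAle ltn_pmod // andbT.
by rewrite {1}(divn_eq a n) -addnS divnMDl // (divn_small h') addn0.
Qed.

Definition Xp (a b : nat) : R :=
  if ((a %% n).+1 == n)%N then rn1 (a %/ n) (b %/ n) * ((0 == b %% n)%N)%:R
  else ((a.+1 == b)%N)%:R.
Definition Xm (a b : nat) : R :=
  if (a %% n == 0)%N then r1n (a %/ n) (b %/ n) * ((n.-1 == b %% n)%N)%:R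
  else ((a.-1 == b)%N)%:R.
Definition Ent (a b : nat) : R :=
  (kap (a %/ n) (a %% n).+1 * (Xp a b - ((a == b)%N)%:R)
   + kap (a %/ n) (a %% n) * (Xm a b - ((a == b)%N)%:R)) / d ^+ 2.

Lemma uextI (a b : 'I_(N * n)) :
  uext H r K (ee b) (a %/ n) (a %% n).+1 = (((a == b :> nat))%:R)%:C.
Proof.
have hI : (a %/ n < N)%N by rewrite ltn_divLR.
rewrite /uext /= eqSS (ltn_eqF (ltn_pmod a hn)) uval_delta //=; first by rewrite -(divn_eq a n).
by rewrite ltn_pmod.
Qed.

Lemma uextP (a b : 'I_(N * n)) :
  uext H r K (ee b) (a %/ n) (a %% n).+2 = (Xp a b)%:C.
Proof.
have hI : (a %/ n < N)%N by rewrite ltn_divLR.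
rewrite /uext /= eqSS /Xp; case: ifP => e.
  by rewrite sum_delta //= interp_n1E -rmorphM.
rewrite uval_delta //=; last by rewrite ltn_neqAle ltn_pmod // andbT e.
by rewrite addnS -divn_eq.
Qed.

Lemma uext0 (a b : 'I_(N * n)) :
  uext H r K (ee b) (a %/ n) (a %% n) = (Xm a b)%:C.
Proof.
have hI : (a %/ n < N)%N by rewrite ltn_divLR.
rewrite /uext /Xm; case: ifP => e0.
  by rewrite sum_delta ?hn ?leqnn //= interp_1nE -rmorphM.
have hlt := ltn_pmod a hn.
rewrite (ltn_eqF (leq_trans hlt (leqnSn _))).
rewrite uval_delta //; last by rewrite lt0n e0 ltnW.
congr ((_ == _)%:R)%:C.
rewrite {3}(divn_eq a n); move: e0 => /negbT; rewrite -lt0n.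
move: (a %% n)%N (a %/ n * n)%N => x y hx.
by rewrite -(prednK hx) addnS.
Qed.

Lemma rhsE (a b : 'I_(N * n)) :
  rhs d H r K kap (ee b) a 0 = (Ent a b)%:C.
Proof.
rewrite /rhs mxE /= uextP uextI uext0 /Ent.
by rewrite -fmorphV -!rmorphB -!rmorphM -rmorphD -rmorphM.
Qed.

Hypothesis hkap : forall I J, (I < N)%N -> (J < N)%N -> kap I 0%N = kap J n.

Lemma keyP (a b : nat) : (a < N * n)%N -> (b < N * n)%N ->
  kap (a %/ n) (a %% n).+1 * Xp a b = kap (b %/ n) (b %% n) * Xm b a.
Proof.
move=> ha hb.
have hI : (a %/ n < N)%N by rewrite ltn_divLR.
have hJ : (b %/ n < N)%N by rewrite ltn_divLR.
rewrite /Xp /Xm.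
have [ea|ea] := eqVneq (a %% n).+1 n; have [eb|eb] := eqVneq (b %% n)%N 0%N.
- have -> : (n.-1 == a %% n)%N = true by rewrite -(f_equal predn ea) eqxx.
  by rewrite !mulr1 r1n_sym ea eb (hkap hJ hI).
- have hb0 : (0 < b)%N by rewrite lt0n; apply: contraNneq eb => ->; rewrite mod0n.
  rewrite mulr0 mulr0.
  case: eqP => [hba|]; last by rewrite mulr0.
  by move: eb; rewrite -(prednK hb0) hba modS_full ea eqxx.
- have e1 : (a.+1 == b)%N = false.
    apply/negbTE; apply: contraNneq ea => hab.
    by move: eb; rewrite -hab modS_full; case: ifP.
  have e2 : (n.-1 == a %% n)%N = false.
    apply/negbTE; apply: contraNneq ea => <-; by rewrite prednK.
  by rewrite e1 e2 !mulr0.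
- have hb0 : (0 < b)%N by rewrite lt0n; apply: contraNneq eb => ->; rewrite mod0n.
  have -> : (b.-1 == a)%N = (a.+1 == b)%N.
    by apply/eqP/eqP => [<-|<-]; rewrite ?prednK.
  case: eqP => [<-|]; last by rewrite !mulr0.
  by rewrite divS_ne // modS_full (negbTE ea).
Qed.

Lemma Ent_sym (a b : nat) : (a < N * n)%N -> (b < N * n)%N -> Ent a b = Ent b a.
Proof.
move=> ha hb; have [<-//|neq] := eqVneq a b.
rewrite /Ent (negbTE neq) eq_sym (negbTE neq) !subr0 (keyP ha hb) (keyP hb ha).
by rewrite addrC.
Qed.

Lemma uvalD (u v : 'cV[R]_(N * n)) J k : uval (u + v) J k = uval u J k + uval v J k.
Proof. by rewrite /uval; case: insub => [x|]; rewrite ?mxE ?addr0. Qed.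

Lemma uvalZ c (u : 'cV[R]_(N * n)) J k : uval (c *: u) J k = c * uval u J k.
Proof. by rewrite /uval; case: insub => [x|]; rewrite ?mxE ?mulr0. Qed.

Lemma uextD (u v : 'cV[R]_(N * n)) I k :
  uext H r K (u + v) I k = uext H r K u I k + uext H r K v I k.
Proof.
rewrite /uext; case: ifP => _; last case: ifP => _.
- by rewrite -big_split; apply: eq_bigr => J _; rewrite uvalD rmorphD mulrDr.
- by rewrite -big_split; apply: eq_bigr => J _; rewrite uvalD rmorphD mulrDr.
- by rewrite uvalD rmorphD.
Qed.

Lemma uextZ c (u : 'cV[R]_(N * n)) I k :
  uext H r K (c *: u) I k = c%:C * uext H r K u I k.
Proof.
rewrite /uext; case: ifP => _; last case: ifP => _.
- by rewrite mulr_sumr; apply: eq_bigr => J _; rewrite uvalZ rmorphM mulrCA.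
- by rewrite mulr_sumr; apply: eq_bigr => J _; rewrite uvalZ rmorphM mulrCA.
- by rewrite uvalZ rmorphM.
Qed.

Lemma rhsD (u v : 'cV[R]_(N * n)) a :
  rhs d H r K kap (u + v) a 0 = rhs d H r K kap u a 0 + rhs d H r K kap v a 0.
Proof. rewrite /rhs !mxE /= !uextD; ring. Qed.

Lemma rhsZ c (u : 'cV[R]_(N * n)) a :
  rhs d H r K kap (c *: u) a 0 = c%:C * rhs d H r K kap u a 0.
Proof. rewrite /rhs !mxE /= !uextZ; ring. Qed.

Lemma rhs_lin (u : 'cV[R]_(N * n)) a :
  rhs d H r K kap u a 0 = \sum_(b < N * n) (u b 0)%:C * rhs d H r K kap (ee b) a 0.
Proof.
have h0 : rhs d H r K kap 0 a 0 = 0.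
  by rewrite -(scale0r (0 : 'cV[R]_(N * n))) rhsZ mul0r.
rewrite {1}(matrix_sum_delta u).
apply: (big_ind2 (fun x y => rhs d H r K kap x a 0 = y)) => //.
  by move=> x1 x2 y1 y2 <- <-; rewrite rhsD.
move=> b _; rewrite big_ord1 rhsZ /ee.
by congr (_ * rhs _ _ _ _ _ _ _ _); rewrite (ord1 _).
Qed.
End Main.

Unset Implicit Arguments.

Theorem lemma1 (R : realType) (N n : nat) (H L d h r : R) (K : seq R)
    (kap : nat -> nat -> R)
    (hN : (0 < N)%N) (hn : (0 < n)%N)
    (hH : 0 < H) (hL : L = N%:R * H) (hd : 0 < d)
    (hh : h = n%:R * d) (hhr : h = r * H) (hr0 : 0 < r) (hr1 : r <= 1)
    (hKuniq : uniq K)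
    (hKint : forall k, k \in K -> exists m : int, k = m%:~R * (2 * pi / L))
    (hKsym : forall k, k \in K -> - k \in K)
    (hkap : forall I J, (I < N)%N -> (J < N)%N -> kap I 0%N = kap J n) :
  (forall I J : 'I_N,
      Im (interp_n1 N H r K I J) = 0 /\ Im (interp_1n N H r K I J) = 0)
  /\ (forall I J : 'I_N, interp_1n N H r K I J = interp_n1 N H r K J I)
  /\ (exists Lm : 'M[R]_(N * n),
        forall u : 'cV[R]_(N * n),
          rhs d H r K kap u = map_mx (real_complex R) (Lm *m u))
  /\ (forall Lm : 'M[R]_(N * n),
        (forall u : 'cV[R]_(N * n),
           rhs d H r K kap u = map_mx (real_complex R) (Lm *m u)) ->
        Lm^T = Lm).
Proof.
split; [|split; [|split]].
- move=> I J; rewrite (interp_n1E _ _ _ hKuniq hKsym) (interp_1nE _ _ _ hKuniq hKsym).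
  by split; apply/Creal_ImP/complex_realP; eexists.
- move=> I J; rewrite (interp_n1E _ _ _ hKuniq hKsym) (interp_1nE _ _ _ hKuniq hKsym).
  by rewrite (r1n_sym _ _ _ hKuniq hKsym).
- exists (\matrix_(a, b) Ent N n H r d K kap a b).
  move=> u; apply/matrixP => a j; rewrite (ord1 j) [RHS]mxE.
  rewrite (rhs_lin _ _ _ _ _ u a) mxE rmorph_sum; apply: eq_bigr => b _.
  by rewrite (rhsE _ _ _ _ hKuniq hKsym hn) mxE mulrC -rmorphM.
- move=> Lm hLm.
  have e : forall a b, Lm a b = Ent N n H r d K kap a b.
    move=> a b; move: (hLm (ee R b)) => /matrixP/(_ a 0).
    rewrite (rhsE _ _ _ _ hKuniq hKsym hn) !mxE => /complexI ->.
    rewrite (bigD1 b) //= big1 ?addr0; first by rewrite /ee mxE !eqxx mulr1.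
    by move=> c hc; rewrite /ee mxE (negbTE hc) mulr0.
  apply/matrixP => a b; rewrite mxE !e.
  exact: (Ent_sym _ _ _ hKuniq hKsym hn hkap (ltn_ord b) (ltn_ord a)).
Qed.
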